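(* Let $G$ be a finite connected interval graph that is balanced and $p$-critical (for some $p\ge 1$), and let $z$ be a vertex of maximum weight in $G$. If $C$ is an exterior local component at $z$, then $C$ consists of exactly two vertices.
   Context: An interval graph is a finite simple graph whose vertices can be assigned (closed, bounded) real intervals $I_v$ so that $v,w$ are adjacent iff $I_v\cap I_w\ne\emptyset$. For such a representation $\alpha$, $\mathrm{imp}_\alpha(z)$ is the number of intervals $I_w$, $w\ne z$, with $I_w\subseteq I_z$; $\mathrm{imp}(\alpha)=\max_z\mathrm{imp}_\alpha(z)$; and the impropriety $\mathrm{imp}(G)$ is the minimum of $\mathrm{imp}(\alpha)$ over all representations. A local component at $z$ is a connected component of $G\setminus\{z\}$; it is exterior iff it contains a vertex not adjacent to $z$. If $z$ has $n$ local components, $\mathrm{wt}(z)$ is the sum of the $n-2$ smallest orders among the non-exterior local components at $z$ ($0$ if $n\le2$), and $\mathrm{wt}(G)=\max_z \mathrm{wt}(z)$. $G$ is balanced iff $\mathrm{wt}(G)=\mathrm{imp}(G)$. For $p>0$, $G$ is $p$-critical iff $\mathrm{imp}(G)=p$ and every proper induced subgraph of $G$ has impropriety strictly less than $p$. *)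

(* Defs.v *)
From Stdlib Require Import Rdefinitions RIneq.
From mathcomp Require Import all_boot.
Set Implicit Arguments. Unset Strict Implicit. Unset Printing Implicit Defensive.

Definition simple_graph (T : finType) (e : rel T) : Prop :=
  symmetric e /\ irreflexive e.

Definition Rleb (x y : R) : bool := if Rle_dec x y then true else false.

Section Graphs.
Variables (T : finType) (e : rel T).

(* (a, b) is an interval representation of the induced subgraph G[S]:
   vertex v in S gets the closed bounded interval [a v, b v]. *)
Definition is_rep (S : {set T}) (a b : T -> R) : Prop :=
  (forall v, v \in S -> Rle (a v) (b v)) /\
  (forall v w, v \in S -> w \in S -> v != w ->
     (e v w <-> (Rle (a v) (b w) /\ Rle (a w) (b v)))).

Definition contained (a b : T -> R) (w z : T) : bool :=
  Rleb (a z) (a w) && Rleb (b w) (b z).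

Definition imp_at (S : {set T}) (a b : T -> R) (z : T) : nat :=
  #|[set w in S | (w != z) && contained a b w z]|.

Definition rep_imp (S : {set T}) (a b : T -> R) : nat :=
  \max_(z in S) imp_at S a b z.

Definition interval_graph (S : {set T}) : Prop :=
  exists a b, is_rep S a b.

Definition impropriety (S : {set T}) (k : nat) : Prop :=
  (exists a b, is_rep S a b /\ rep_imp S a b = k) /\
  (forall a b, is_rep S a b -> k <= rep_imp S a b).

Definition p_critical (p : nat) : Prop :=
  0 < p /\ impropriety [set: T] p /\
  (forall S : {set T}, S \proper [set: T] ->
     exists k, k < p /\ impropriety S k).

Definition connected_graph : Prop := forall x y : T, connect e x y.

Definition erestr (A : {set T}) : rel T :=
  [rel x y | [&& x \in A, y \in A & e x y]].

Definition local_components (z : T) : {set {set T}} :=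
  [set [set y | connect (erestr [set~ z]) x y] | x in [set~ z]].

Definition exterior (z : T) (C : {set T}) : bool :=
  [exists v in C, ~~ e z v].

Definition non_exterior_components (z : T) : {set {set T}} :=
  [set C in local_components z | ~~ exterior z C].

Definition wt (z : T) : nat :=
  sumn (take (#|local_components z| - 2)
              (sort leq (map (fun C : {set T} => #|C|) (enum (non_exterior_components z))))).

Definition wtG : nat := \max_(z : T) wt z.

Definition balanced : Prop := impropriety [set: T] wtG.

End Graphs.

(* Main.v *)
Require Import Defs.
From Stdlib Require Import Rdefinitions RIneq.
From mathcomp Require Import all_boot.
From Stdlib Require Import Rdefinitions RIneq Lra.
From mathcomp Require Import all_boot zify.
From Stdlib Require Import Lia.
Set Implicit Arguments. Unset Strict Implicit. Unset Printing Implicit Defensive.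
Lemma sumn_takeC (u : seq nat) (x k : nat) :
  sorted leq (x :: u) -> k < size u ->
  x + sumn (take k u) <= sumn (take k.+1 u).
Proof.
elim: u x k => [|y u IH] x k //= /andP[hxy hs] hk.
case: k hk => [|k] hk /=; first by move: hxy; rewrite /= addn0; case: u {IH hs hk}; rewrite /= ?addn0.
have := IH y k hs hk. lia.
Qed.

Lemma sumn_takeB (u t r : seq nat) (k : nat) :
  sorted leq u -> perm_eq u (t ++ r) -> k <= size t ->
  sumn (take k u) <= sumn t.
Proof.
elim: u t r k => [|x u IH] t r k hs hp hk.
  have := perm_size hp; rewrite size_cat /=. move=> h.
  by [].
have hs' : sorted leq u by move: hs => /= /path_sorted.
have hx : x \in t ++ r by rewrite -(perm_mem hp) mem_head.
case hxt: (x \in t).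
  have pt := perm_to_rem hxt.
  rewrite (perm_sumn pt) /=.
  have hp' : perm_eq u (rem x t ++ r).
    rewrite -(perm_cons x). apply: (perm_trans hp).
    by rewrite -cat_cons perm_cat2r.
  case: k hk => [|k] hk; first by [].
  rewrite /= leq_add2l; apply: (IH _ r) => //.
  by rewrite (perm_size pt) in hk.
have hxr : x \in r by move: hx; rewrite mem_cat hxt.
have pr := perm_to_rem hxr.
have hp' : perm_eq u (t ++ rem x r).
  rewrite -(perm_cons x). apply: (perm_trans hp).
  rewrite perm_sym -cat1s catA perm_sym.
  rewrite -(perm_cat2l t) in pr.
  apply: (perm_trans pr). by rewrite -cat1s perm_catCA.
have hsz : size t <= size u.
  by rewrite (perm_size hp') size_cat leq_addr.
have IHk := IH t (rem x r) k hs' hp' hk.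
case: k hk IHk => [|k] hk IHk; first by [].
have := sumn_takeC hs (leq_trans hk hsz). rewrite /=. lia.
Qed.

Lemma RlebP x y : reflect (Rle x y) (Rleb x y).
Proof. rewrite /Rleb; case: Rle_dec => h; by constructor. Qed.

Section G.
Variables (T : finType) (e : rel T) (z : T).
Hypothesis esy : symmetric e.
Hypothesis eirr : irreflexive e.
Hypothesis econn : connected_graph e.

Let restr := erestr e [set~ z].
Let comp x := [set y | connect restr x y].
Let L := local_components e z.

Lemma restr_sym : connect_sym restr.
Proof.
apply: sym_connect_sym => x y; rewrite /restr /erestr /=.
by rewrite esy andbCA andbA.
Qed.

Lemma restr_notz x y : connect restr x y -> x != z -> y != z.
Proof.
move/connectP=> [p pth ->]; elim: p x pth => //= y' p IH x /andP[h1 h2] _.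
apply: IH h2 _. by move: h1; rewrite /restr /erestr /= !in_setC1 => /and3P[].
Qed.

Lemma compP K : K \in L -> exists2 x, x != z & K = comp x.
Proof. by case/imsetP=> x; rewrite in_setC1 => hx ->; exists x. Qed.

Lemma L_mem K x : K \in L -> x \in K -> K = comp x.
Proof.
case/compP=> x0 _ -> ; rewrite inE => hc.
apply/setP=> w; rewrite !inE; apply/idP/idP => h.
- by rewrite restr_sym in hc; apply: connect_trans hc h.
- by apply: connect_trans hc h.
Qed.

Lemma L_notz K x : K \in L -> x \in K -> x != z.
Proof. by case/compP=> x0 hx0 -> ; rewrite inE => hc; apply: restr_notz hc hx0. Qed.

Lemma L_same K1 K2 x y : K1 \in L -> K2 \in L -> x \in K1 -> y \in K2 ->
  (x = y \/ e x y) -> K1 = K2.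
Proof.
move=> h1 h2 hx hy hxy.
rewrite (L_mem h1 hx) (L_mem h2 hy).
have : connect restr x y.
  case: hxy => [->|exy]; first exact: connect0.
  apply: connect1; rewrite /restr /erestr /= !in_setC1 exy.
  by rewrite (L_notz h1 hx) (L_notz h2 hy).
move=> c; apply/setP=> w; rewrite !inE; apply/idP/idP => h.
- by rewrite restr_sym in c; apply: connect_trans c h.
- by apply: connect_trans c h.
Qed.

Lemma path_to_z p x : path e x p -> last x p = z -> x != z ->
  exists2 y, connect restr x y & e y z.
Proof.
elim: p x => [|y p IH] x /=; first by move=> _ -> ; rewrite eqxx.
case/andP=> exy pth hl hx.
case: (eqVneq y z) => [hyz|hyz]; first by exists x => //; rewrite -hyz.
case: (IH y pth hl hyz) => w hw ewz; exists w => //.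
apply: connect_trans hw; apply: connect1.
by rewrite /restr /erestr /= !in_setC1 hx hyz exy.
Qed.

Lemma L_neighbor K : K \in L -> exists2 u, u \in K & e z u.
Proof.
case/compP=> x hx ->.
case/connectP: (econn x z) => p pth hl.
case: (path_to_z pth (esym hl) hx) => y hy eyz.
by exists y; rewrite ?inE // esy.
Qed.

Lemma path_ext p x : path e x p -> last x p = z -> x != z -> ~~ e z x ->
  exists a b, [/\ connect restr x b, b != z, ~~ e z b, e z a & e a b].
Proof.
elim: p x => [|y p IH] x /=; first by move=> _ -> ; rewrite eqxx.
case/andP=> exy pth hl hx nzx.
case: (eqVneq y z) => [hyz|hyz].
  by move: nzx; rewrite esy -hyz exy.
case ezy: (e z y).
  by exists y, x; split; rewrite ?connect0 // esy.
case: (IH y pth hl hyz (negbT ezy)) => a [b [hc hb nb za ab]].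
exists a, b; split => //.
apply: connect_trans hc; apply: connect1.
by rewrite /restr /erestr /= !in_setC1 hx hyz exy.
Qed.

Lemma L_ext C : C \in L -> exterior e z C ->
  exists a b, [/\ a \in C, b \in C, e z a, e a b & ~~ e z b].
Proof.
move=> hC /existsP[v /andP[hv nzv]].
have hvz := L_notz hC hv.
case/connectP: (econn v z) => p pth hl.
case: (path_ext pth (esym hl) hvz nzv) => a [b [hc hb nb za ab]].
have hbC : b \in C by rewrite (L_mem hC hv) inE.
exists a, b; split => //.
rewrite (L_mem hC hbC) inE; apply: connect1.
rewrite /restr /erestr /= !in_setC1 hb esy ab andbT.
by apply/eqP=> haz; move: za; rewrite haz eirr.
Qed.


Variables (S : {set T}) (lo hi : T -> R).
Hypothesis hrep : is_rep e S lo hi.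

Lemma rep_adj v w : v \in S -> w \in S -> e v w ->
  Rle (lo v) (hi w) /\ Rle (lo w) (hi v).
Proof.
move=> hv hw evw; have hne : v != w by apply/eqP=> h; move: evw; rewrite h eirr.
by apply/(proj2 hrep v w hv hw hne).
Qed.

Lemma rep_adjI v w t : v \in S -> w \in S ->
  Rle (lo v) t -> Rle t (hi v) -> Rle (lo w) t -> Rle t (hi w) ->
  v = w \/ e v w.
Proof.
move=> hv hw h1 h2 h3 h4; case: (eqVneq v w) => [->|hne]; first by left.
right; apply/(proj2 hrep v w hv hw hne); split; lra.
Qed.

Lemma rep_nadj v w : v \in S -> w \in S -> v != w -> ~~ e v w ->
  Rlt (hi v) (lo w) \/ Rlt (hi w) (lo v).
Proof.
move=> hv hw hne nvw.
have : ~ (Rle (lo v) (hi w) /\ Rle (lo w) (hi v)).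
  by move/(proj2 hrep v w hv hw hne) => h; rewrite h in nvw.
move=> h; case: (Rlt_le_dec (hi v) (lo w)) => h1; first by left.
case: (Rlt_le_dec (hi w) (lo v)) => h2; first by right.
by exfalso; apply: h; split.
Qed.

Lemma cover_path t p x : path restr x p -> {subset x :: p <= S} ->
  Rle (lo x) t -> Rle t (hi (last x p)) ->
  exists2 w, w \in x :: p & [/\ w \in S, Rle (lo w) t & Rle t (hi w)].
Proof.
elim: p x => [|y p IH] x /=.
  by move=> _ sub h1 h2; exists x; rewrite ?mem_head //; split => //; apply: sub; rewrite mem_head.
case/andP=> rxy pth sub h1 h2.
have hxS : x \in S by apply: sub; rewrite mem_head.
case: (Rle_dec t (hi x)) => ht.
  by exists x; rewrite ?mem_head.
have exy : e x y by move: rxy; rewrite /restr /erestr /= => /and3P[].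
have hyS : y \in S by apply: sub; rewrite !inE eqxx orbT.
have [_ hyx] := rep_adj hxS hyS exy.
have sub' : {subset y :: p <= S} by move=> w hw; apply: sub; rewrite inE hw orbT.
have [|w hw hw2] := IH y pth sub' _ h2; first lra.
by exists w => //; rewrite inE hw orbT.
Qed.

Definition covers t (K : {set T}) :=
  [exists w in K, (w \in S) && Rleb (lo w) t && Rleb t (hi w)].

Lemma coversI t (K : {set T}) w : w \in K -> w \in S -> Rle (lo w) t -> Rle t (hi w) -> covers t K.
Proof.
move=> hK hS h1 h2; apply/existsP; exists w.
by rewrite hK hS; do 2 (apply/andP; split => //); apply/RlebP.
Qed.

Lemma covers_uniq t K1 K2 : K1 \in L -> K2 \in L -> covers t K1 -> covers t K2 -> K1 = K2.
Proof.
move=> h1 h2 /existsP[w1 /andP[hw1 /andP[/andP[s1 /RlebP a1] /RlebP b1]]].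
move=> /existsP[w2 /andP[hw2 /andP[/andP[s2 /RlebP a2] /RlebP b2]]].
exact: (L_same h1 h2 hw1 hw2 (rep_adjI s1 s2 a1 b1 a2 b2)).
Qed.


Lemma main_bound (C : {set T}) (a0 b0 : T) :
  z \in S -> C \in L -> exterior e z C ->
  (forall K, K \in L -> K != C -> K \subset S) ->
  a0 \in C -> b0 \in C -> a0 \in S -> b0 \in S ->
  e z a0 -> e a0 b0 -> ~~ e z b0 ->
  wt e z <= imp_at S lo hi z.
Proof.
move=> hzS hC extC subS a0C b0C a0S b0S za0 a0b0 nzb0.
set W := [set w in S | (w != z) && contained lo hi w z].
set N := non_exterior_components e z.
set good := [set K in N | K \subset W].
have goodN : good \subset N by apply/subsetP=> K; rewrite inE => /andP[].
have NL : N \subset L by apply/subsetP=> K; rewrite inE => /andP[].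
have goodL : good \subset L := subset_trans goodN NL.
have bad : forall K, K \in L -> K \notin good -> covers (lo z) K || covers (hi z) K.
  move=> K hK hng.
  case: (eqVneq K C) => [->|hKC].
    have hzb : z != b0 by apply/eqP=> h; move: (L_notz hC b0C); rewrite h eqxx.
    have [h1 h2] := rep_adj hzS a0S za0.
    have [h3 h4] := rep_adj a0S b0S a0b0.
    case: (rep_nadj hzS b0S hzb nzb0) => h.
      by apply/orP; right; apply: (coversI a0C a0S); lra.
    by apply/orP; left; apply: (coversI a0C a0S); lra.
  have KS := subS K hK hKC.
  case extK : (exterior e z K).
    case/existsP: extK => v /andP[vK nzv].
    case: (L_neighbor hK) => u uK zu.
    have vS : v \in S by apply: (subsetP KS).
    have uS : u \in S by apply: (subsetP KS).
    have hzv : z != v by apply/eqP=> h; move: (L_notz hK vK); rewrite h eqxx.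
    have [h1 h2] := rep_adj hzS uS zu.
    have sub : forall x p, x \in K -> path restr x p -> {subset x :: p <= S}.
      move=> x p xK pth w hw; apply: (subsetP KS).
      by rewrite (L_mem hK xK) inE; apply: (path_connect pth).
    case: (rep_nadj hzS vS hzv nzv) => h.
      have : connect restr u v by rewrite (L_mem hK uK) inE in vK.
      case/connectP=> p pth hl.
      have hlast : Rle (hi z) (hi (last u p)).
        by rewrite -hl; have := proj1 hrep v vS; lra.
      have [w hw [wS w1 w2]] := cover_path pth (sub _ _ uK pth) h2 hlast.
      apply/orP; right; apply: (coversI _ wS w1 w2).
      by rewrite (L_mem hK uK) inE; apply: (path_connect pth).
    have : connect restr v u by rewrite (L_mem hK vK) inE in uK.
    case/connectP=> p pth hl.
    have hfirst : Rle (lo v) (lo z) by have := proj1 hrep v vS; lra.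
    have hlast : Rle (lo z) (hi (last v p)) by rewrite -hl.
    have [w hw [wS w1 w2]] := cover_path pth (sub _ _ vK pth) hfirst hlast.
    apply/orP; left; apply: (coversI _ wS w1 w2).
    by rewrite (L_mem hK vK) inE; apply: (path_connect pth).
  have KN : K \in N by rewrite inE hK extK.
  have : ~~ (K \subset W) by move: hng; rewrite inE KN.
  case/subsetPn => w wK wW.
  have wS : w \in S by apply: (subsetP KS).
  have zw : e z w.
    apply/negPn; apply: contraFN extK => h; apply/existsP; exists w; by rewrite wK.
  have [h1 h2] := rep_adj hzS wS zw.
  have wz : w != z by apply: (L_notz hK wK).
  have nc : ~~ contained lo hi w z by move: wW; rewrite inE wS wz.
  case: (Rlt_le_dec (lo w) (lo z)) => h3.
    by apply/orP; left; apply: (coversI wK wS); lra.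
  case: (Rlt_le_dec (hi z) (hi w)) => h4.
    by apply/orP; right; apply: (coversI wK wS); lra.
  by move: nc; rewrite /contained; do 2 case: RlebP => //.
have cardbad : #|L :\: good| <= 2.
  rewrite -(card_bool).
  apply: (@leq_card_in _ _ (fun K => covers (lo z) K)).
  move=> K1 K2; rewrite !in_setD => /andP[ng1 h1] /andP[ng2 h2] /= eq12.
  have b1 := bad _ h1 ng1; have b2 := bad _ h2 ng2.
  case c1 : (covers (lo z) K1) eq12 b1 b2 => /= eq12 b1 b2.
    by apply: (covers_uniq h1 h2 c1); rewrite -eq12.
  by apply: (covers_uniq h1 h2 b1); move: b2; rewrite -eq12.
have hk : #|L| - 2 <= #|good|.
  have := cardsID good L; rewrite (setIidPr goodL) => h.
  by rewrite -h leq_subLR addnC leq_add2r.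
have hsum : \sum_(K in good) #|K| <= imp_at S lo hi z.
  have triv : trivIset good.
    apply/trivIsetP=> K1 K2 h1 h2 hne.
    apply/pred0P=> w /=; apply/negP=> /andP[w1 w2].
    have h1L := subsetP goodL _ h1; have h2L := subsetP goodL _ h2.
    by move: hne; rewrite (L_same h1L h2L w1 w2 (or_introl erefl)) eqxx.
  move: triv; rewrite /trivIset => /eqP ->.
  rewrite /imp_at -/W; apply: subset_leq_card.
  by apply/bigcupsP=> K; rewrite inE => /andP[].
have eg : [seq K <- enum N | K \in good] = enum good.
  rewrite {2}/enum_mem -filter_predI; apply: eq_filter => K /=.
  by apply/andb_idr => hg; exact: (subsetP goodN _ hg).
apply: leq_trans hsum.
rewrite /wt -/L -/N.
have -> : \sum_(K in good) #|K| = sumn (map (fun K : {set T} => #|K|) (enum good)).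
  by rewrite sumnE big_map big_enum.
apply: (@sumn_takeB _ _ (map (fun K : {set T} => #|K|) [seq K <- enum N | predC (mem good) K])).
- by apply: sort_sorted => m n; apply: leq_total.
- rewrite perm_sort -map_cat; apply: perm_map.
  by rewrite -eg perm_sym perm_filterC.
- by rewrite size_map -cardE.
Qed.

End G.

Theorem theorem3p1 (T : finType) (e : rel T) (p : nat) (z : T) (C : {set T}) :
  simple_graph e ->
  connected_graph e ->
  interval_graph e [set: T] ->
  balanced e ->
  1 <= p ->
  p_critical e p ->
  (forall y : T, wt e y <= wt e z) ->
  C \in local_components e z ->
  exterior e z C ->
  #|C| = 2.
Proof.
move=> [esy eirr] conn _ bal _ crit zmax hC extC.
have wtz : wtG e = wt e z.
  apply/eqP; rewrite eqn_leq; apply/andP; split.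
    by apply/bigmax_leqP => y _; exact: zmax.
  rewrite /wtG; exact: leq_bigmax.

have pw : p = wt e z.
  move: (crit) (bal); rewrite /p_critical /balanced /impropriety.
  move=> [_ [[[a [b [ra ia]]] mi] _]] [[a' [b' [ra' ia']]] mi'].
  rewrite -wtz; apply/eqP; rewrite eqn_leq.
  have h1 := mi _ _ ra'; have h2 := mi' _ _ ra.
  rewrite ia' in h1; rewrite ia in h2; by rewrite h1 h2.
have [a0 [b0 [a0C b0C za0 a0b0 nzb0]]] := L_ext esy eirr conn hC extC.
have ab : a0 != b0 by apply/eqP=> h; move: a0b0; rewrite h eirr.
apply/eqP; rewrite eqn_leq; apply/andP; split; last first.
  have <- : #|[set a0; b0]| = 2 by rewrite cards2 ab.
  by apply: subset_leq_card; apply/subsetP=> w; rewrite !inE => /orP[]/eqP->.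
rewrite leqNgt; apply/negP => hC2.
have : 0 < #|C :\: [set a0; b0]|.
  rewrite cardsD; have : #|C :&: [set a0; b0]| <= 2.
    by apply: leq_trans (subset_leq_card (subsetIr C _)) _; rewrite cards2 ab.
  move=> h; rewrite subn_gt0; exact: leq_ltn_trans h hC2.
rewrite card_gt0 => /set0Pn [v hv].
set S := ~: (C :\: [set a0; b0]).
have Sp : S \proper [set: T].
  rewrite properT; apply/eqP=> h; have : v \in S by rewrite h inE.
  by rewrite inE hv.
move: crit; rewrite /p_critical => -[_ [_ /(_ S Sp) [k [kp [[lo [hi [rep eqk]]] _]]]]].
have zC : z \notin C.
  by apply/negP=> h; move: (L_notz hC h); rewrite eqxx.
have hzS : z \in S by rewrite !inE (negbTE zC) andbF.
have a0S : a0 \in S by rewrite !inE eqxx.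
have b0S : b0 \in S by rewrite !inE eqxx orbT.
have subS : forall K, K \in local_components e z -> K != C -> K \subset S.
  move=> K hK hKC; apply/subsetP=> w wK; rewrite !inE.
  case wC : (w \in C); last by rewrite andbF.
  by move: hKC; rewrite (L_same esy hK hC wK wC (or_introl erefl)) eqxx.
have := main_bound esy eirr conn rep hzS hC extC subS a0C b0C a0S b0S za0 a0b0 nzb0.
move=> hb.
have : imp_at S lo hi z <= rep_imp S lo hi.
  by rewrite /rep_imp; apply: leq_bigmax_cond.
rewrite eqk => h2.
by move: kp; rewrite pw ltnNge (leq_trans hb h2).
Qed.
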